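(* Let $k,d\ge 1$ and $n\ge k$ be integers, and let $H=\sum_{1\le i_1<\cdots<i_k\le n} H_{i_1,\ldots,i_k}$ be an instance of the MAX-$k$-local Hamiltonian problem on $n$ qudits of dimension $d$, with optimal value $\mathrm{OPT}=\lambda_{\max}(H)$. Then there exists a pure product state $\lvert\phi\rangle=\lvert\phi_1\rangle\otimes\cdots\otimes\lvert\phi_n\rangle$, with each $\lvert\phi_i\rangle\in\mathbb{C}^d$ a unit vector, such that $\langle\phi\rvert H\lvert\phi\rangle\ge \mathrm{OPT}/d^{k-1}$.
   Context: MAX-$k$-local Hamiltonian on $d$-level systems (qudits): an instance on $n$ qudits (Hilbert space $(\mathbb{C}^d)^{\otimes n}$) consists of one Hermitian matrix $H_{i_1,\ldots,i_k}$ for each $k$-element subset $\{i_1,\ldots,i_k\}$ of the qudits; each $H_{i_1,\ldots,i_k}$ acts nontrivially only on those $k$ qudits (i.e. is a positive semidefinite operator on $(\mathbb{C}^d)^{\otimes k}$ of operator norm at most $1$, tensored with the identity on the other qudits). Put $H=\sum H_{i_1,\ldots,i_k}$. An assignment is any (pure or mixed) state $\rho$ on the $n$ qudits, with value $\mathrm{Tr}(H\rho)$; the optimal value $\mathrm{OPT}$ is the largest eigenvalue of $H$, i.e. the maximal value of an assignment. *)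

(* Defs.v *)
(* Complex scalars: an arbitrary numClosedFieldType C
   (e.g. algC, or R[i] for a real closed field R). *)
From HB Require Import structures.
From mathcomp Require Import all_boot all_order all_algebra.
Set Implicit Arguments. Unset Strict Implicit. Unset Printing Implicit Defensive.
Import Order.TTheory GRing.Theory Num.Theory.
Local Open Scope ring_scope.

Definition dotp (C : numClosedFieldType) (T : finType) (u v : T -> C) : C :=
  \sum_(x : T) (u x)^* * v x.

Definition applyop (C : numClosedFieldType) (T : finType)
  (A : T -> T -> C) (v : T -> C) : T -> C :=
  fun x => \sum_(y : T) A x y * v y.

Definition hermitian (C : numClosedFieldType) (T : finType) (A : T -> T -> C) :=
  forall x y, A y x = (A x y)^*.

Definition psd (C : numClosedFieldType) (T : finType) (A : T -> T -> C) :=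
  hermitian A /\ forall v : T -> C, 0 <= dotp v (applyop A v).

Definition opnorm_le1 (C : numClosedFieldType) (T : finType) (A : T -> T -> C) :=
  forall v : T -> C, dotp (applyop A v) (applyop A v) <= dotp v v.

Definition eigenvalue (C : numClosedFieldType) (T : finType)
  (A : T -> T -> C) (lam : C) :=
  exists v : T -> C, (exists x, v x != 0) /\ forall x, applyop A v x = lam * v x.

Definition is_lambda_max (C : numClosedFieldType) (T : finType)
  (A : T -> T -> C) (lam : C) :=
  eigenvalue A lam /\ forall mu, eigenvalue A mu -> mu <= lam.

(* Computational basis of n qudits of dimension d: configurations 'I_n -> 'I_d;
   (C^d)^{(x)n} has basis indexed by conf n d. *)
Definition conf (n d : nat) := {ffun 'I_n -> 'I_d}.

Definition lconf (n d : nat) (S : {set 'I_n}) := {ffun {i : 'I_n | i \in S} -> 'I_d}.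

Definition restrict (n d : nat) (S : {set 'I_n}) (x : conf n d) : lconf d S :=
  [ffun i : {i : 'I_n | i \in S} => x (val i)].

(* h (acting on the qudits of S) tensored with the identity on the others *)
Definition embed (C : numClosedFieldType) (n d : nat) (S : {set 'I_n})
  (h : lconf d S -> lconf d S -> C) : conf n d -> conf n d -> C :=
  fun x y => if [forall i, (i \notin S) ==> (x i == y i)]
             then h (restrict S x) (restrict S y) else 0.

Definition kham (C : numClosedFieldType) (n d k : nat)
  (h : forall S : {set 'I_n}, lconf d S -> lconf d S -> C) :
  conf n d -> conf n d -> C :=
  fun x y => \sum_(S : {set 'I_n} | #|S| == k) embed (h S) x y.

Definition prodstate (C : numClosedFieldType) (n d : nat)
  (phi : 'I_n -> 'I_d -> C) : conf n d -> C :=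
  fun x => \prod_(i : 'I_n) phi i (x i).

(* Main.v *)
Require Import Defs.
From HB Require Import structures.
From mathcomp Require Import all_boot all_order all_algebra.
From Stdlib Require Import FunctionalExtensionality.
From mathcomp Require Import ring zify.
From Stdlib Require Import Lia.
Import Order.TTheory GRing.Theory Num.Theory.
Local Open Scope ring_scope.

Lemma conjMl (C : numClosedFieldType) (a b : C) : (a^* * b)^* = a * b^*.
Proof. by rewrite rmorphM /= conjCK. Qed.

Section Basics.
Variables (C : numClosedFieldType) (n d : nat).
Local Notation cf := (conf n d).

Lemma sum_invol (T : finType) (g : T -> T) (F : T -> C) :
  involutive g -> \sum_t F t = \sum_t F (g t).
Proof. by move=> hg; rewrite (reindex_inj (inv_inj hg)). Qed.

Definition upd (i0 : 'I_n) (x : cf) (a : 'I_d) : cf :=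
  [ffun j => if j == i0 then a else x j].

Lemma upd_at i0 x a : upd i0 x a i0 = a.
Proof. by rewrite ffunE eqxx. Qed.
Lemma upd_ne i0 x a j : j != i0 -> upd i0 x a j = x j.
Proof. by rewrite ffunE => /negbTE ->. Qed.
Lemma upd_upd i0 x a b : upd i0 (upd i0 x a) b = upd i0 x b.
Proof. by apply/ffunP => j; rewrite !ffunE; case: (j == i0). Qed.
Lemma upd_id i0 x : upd i0 x (x i0) = x.
Proof. by apply/ffunP => j; rewrite !ffunE; case: eqP => // ->. Qed.

Lemma sum_upd_swap i0 (F : cf -> 'I_d -> C) :
  \sum_x \sum_a F x a = \sum_x \sum_a F (upd i0 x a) (x i0).
Proof.
rewrite !pair_bigA /=.
apply: (@sum_invol _ (fun p : cf * 'I_d => (upd i0 p.1 p.2, p.1 i0))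
   (fun p => F p.1 p.2)).
by case=> x a /=; rewrite upd_upd upd_id upd_at.
Qed.

Variable S : {set 'I_n}.
Local Notation lc := (lconf d S).

Definition merge (x : cf) (b : lc) : cf :=
  [ffun i => if (insub i : option {i : 'I_n | i \in S}) is Some j then b j else x i].

Lemma merge_in x b i (hi : i \in S) : merge x b i = b (exist _ i hi).
Proof. by rewrite ffunE (insubT (fun i => i \in S) hi). Qed.
Lemma merge_out x b i : i \notin S -> merge x b i = x i.
Proof. by move=> hi; rewrite ffunE insubF //; apply/negbTE. Qed.
Lemma restrict_merge x b : restrict S (merge x b) = b.
Proof.
apply/ffunP => [[i hi]]; rewrite ffunE /= merge_in; congr (b _); exact: val_inj.
Qed.
Lemma merge_merge x a b : merge (merge x a) b = merge x b.
Proof.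
apply/ffunP => i; case: (boolP (i \in S)) => hi.
  by rewrite !merge_in.
by rewrite !merge_out.
Qed.
Lemma merge_restrict x : merge x (restrict S x) = x.
Proof.
apply/ffunP => i; case: (boolP (i \in S)) => hi.
  by rewrite merge_in ffunE.
by rewrite merge_out.
Qed.

Lemma sum_merge_swap (F : cf -> lc -> C) :
  \sum_x \sum_a F x a = \sum_x \sum_a F (merge x a) (restrict S x).
Proof.
rewrite !pair_bigA /=.
apply: (@sum_invol _ (fun p : cf * lc => (merge p.1 p.2, restrict S p.1))
   (fun p => F p.1 p.2)).
by case=> x a /=; rewrite merge_merge merge_restrict restrict_merge.
Qed.

Lemma sum_merge_avg (G : cf -> C) :
  \sum_x \sum_a G (merge x a) = #|{: lc}|%:R * \sum_x G x.
Proof.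
rewrite (sum_merge_swap (fun x a => G (merge x a))) mulr_sumr; apply: eq_bigr => x _.
under eq_bigr do rewrite merge_merge merge_restrict.
by rewrite sumr_const mulr_natl.
Qed.

Lemma embed_apply (hh : lc -> lc -> C) (g : cf -> C) x :
  applyop (embed hh) g x = \sum_b hh (restrict S x) b * g (merge x b).
Proof.
rewrite /applyop /embed.
transitivity (\sum_y \sum_b (if y == merge x b then
    hh (restrict S x) (restrict S y) * g y else 0)).
  apply: eq_bigr => y _; case: ifP => hag; last first.
    rewrite mul0r big1 // => b _; case: eqP => // hy.
    move/negP: hag; case; rewrite hy; apply/forallP => i; apply/implyP => hi.
    by rewrite merge_out.
  rewrite (bigD1 (restrict S y)) //= big1 ?addr0.
    suff -> : y == merge x (restrict S y) by [].
    apply/eqP/ffunP => i; case: (boolP (i \in S)) => hi.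
      by rewrite merge_in ffunE.
    by rewrite merge_out //; apply/esym/eqP; exact: (implyP ((forallP hag) i) hi).
  move=> b hb; case: eqP => // hy; move/eqP: hb; case.
  by rewrite hy restrict_merge.
rewrite exchange_big; apply: eq_bigr => b _.
rewrite -big_mkcond /= big_pred1_eq restrict_merge //.
Qed.


End Basics.
Arguments merge {n d S}.
Arguments upd {n d}.
Arguments sum_upd_swap {C n d}.
Arguments sum_merge_swap {C n d S}.

Section Forms.
Variables (C : numClosedFieldType) (n d : nat).
Local Notation cf := (conf n d).
Implicit Types (f g h : cf -> C) (A : cf -> cf -> C).

Lemma dotp_suml (I : finType) (f : I -> cf -> C) g :
  dotp (fun x => \sum_i f i x) g = \sum_i dotp (f i) g.
Proof.
rewrite /dotp exchange_big; apply: eq_bigr => x _.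
by rewrite rmorph_sum mulr_suml.
Qed.

Lemma dotp_sumr (I : finType) (f : I -> cf -> C) g :
  dotp g (fun x => \sum_i f i x) = \sum_i dotp g (f i).
Proof.
rewrite /dotp exchange_big; apply: eq_bigr => x _.
by rewrite mulr_sumr.
Qed.

Lemma applyop_sum (I : finType) A (f : I -> cf -> C) :
  applyop A (fun x => \sum_i f i x) = fun x => \sum_i applyop A (f i) x.
Proof.
apply: functional_extensionality => x; rewrite /applyop exchange_big.
apply: eq_bigr => y _; by rewrite mulr_sumr.
Qed.

Lemma form_sum (I : finType) A (f : I -> cf -> C) :
  dotp (fun x => \sum_i f i x) (applyop A (fun x => \sum_i f i x)) =
  \sum_i \sum_j dotp (f i) (applyop A (f j)).
Proof.
rewrite applyop_sum dotp_suml; apply: eq_bigr => i _.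
by rewrite dotp_sumr.
Qed.

Lemma dotp_subl f g h : dotp (fun x => f x - g x) h = dotp f h - dotp g h.
Proof.
rewrite /dotp -sumrB; apply: eq_bigr => x _.
by rewrite rmorphB mulrBl.
Qed.

Lemma dotp_subr f g h : dotp h (fun x => f x - g x) = dotp h f - dotp h g.
Proof.
rewrite /dotp -sumrB; apply: eq_bigr => x _.
by rewrite mulrBr.
Qed.

Lemma applyop_sub A f g :
  applyop A (fun x => f x - g x) = fun x => applyop A f x - applyop A g x.
Proof.
apply: functional_extensionality => x; rewrite /applyop -sumrB.
apply: eq_bigr => y _; by rewrite mulrBr.
Qed.

Lemma dotp_scalel f h a : dotp (fun x => f x * a) h = a^* * dotp f h.
Proof.
rewrite /dotp mulr_sumr; apply: eq_bigr => x _.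
by rewrite rmorphM /= mulrA [_ * a^*]mulrC.
Qed.

Lemma dotp_scaler f h a : dotp h (fun x => f x * a) = dotp h f * a.
Proof.
rewrite /dotp mulr_suml; apply: eq_bigr => x _.
by rewrite mulrA.
Qed.

Lemma applyop_scale A f a :
  applyop A (fun x => f x * a) = fun x => applyop A f x * a.
Proof.
apply: functional_extensionality => x; rewrite /applyop mulr_suml.
apply: eq_bigr => y _; by rewrite mulrA.
Qed.

Lemma dotp_ge0 f : 0 <= dotp f f.
Proof.
rewrite /dotp; apply: sumr_ge0 => x _; rewrite mulrC; exact: mul_conjC_ge0.
Qed.

Lemma sumr_constT (I : finType) (x : C) : \sum_(i : I) x = x *+ #|I|.
Proof. by rewrite sumr_const. Qed.

Lemma pinch_abs (I : finType) (B : I -> I -> C)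
  (h0 : forall i j, B i j + B j i <= B i i + B j j) :
  \sum_i \sum_j B i j <= #|I|%:R * \sum_i B i i.
Proof.
have h1 : \sum_i \sum_j (B i j + B j i) <= \sum_i \sum_j (B i i + B j j).
  by apply: ler_sum => i _; apply: ler_sum => j _; exact: h0.
have e1 : \sum_i \sum_j (B i j + B j i) = 2 * \sum_i \sum_j B i j.
  under eq_bigr do rewrite big_split /=.
  rewrite big_split /= [X in _ + X = _]exchange_big /=.
  move: (\sum_i \sum_j B i j) => s; ring.
have e2 : \sum_i \sum_j (B i i + B j j) = 2 * (#|I|%:R * \sum_i B i i).
  under eq_bigr do rewrite big_split /= sumr_constT.
  rewrite big_split /= sumr_constT sumrMnl.
  move: (\sum_i B i i) => s; rewrite -[s *+ #|I|]mulr_natl; move: (#|I|%:R : C) => N; ring.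
rewrite e1 e2 in h1.
by rewrite -(ler_pM2l (_ : 0 < 2 :> C)) //.
Qed.

Lemma pinch (I : finType) A (hA : forall f, 0 <= dotp f (applyop A f))
  (y : I -> cf -> C) :
  dotp (fun x => \sum_i y i x) (applyop A (fun x => \sum_i y i x)) <=
  #|I|%:R * \sum_i dotp (y i) (applyop A (y i)).
Proof.
rewrite form_sum; apply: pinch_abs => i j.
have := hA (fun x => y i x - y j x).
rewrite applyop_sub dotp_subl !dotp_subr.
move: (dotp (y i) _) (dotp (y j) _) (dotp (y i) (applyop A (y j))) (dotp (y j) (applyop A (y i))).
move=> a b c e H; rewrite -subr_ge0; apply: le_trans H _.
rewrite le_eqVlt; apply/orP; left; apply/eqP; ring.
Qed.

Lemma embed_psd (a0 : 'I_d) (S : {set 'I_n}) (hh : lconf d S -> lconf d S -> C) :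
  psd hh -> forall f, 0 <= dotp f (applyop (embed hh) f).
Proof.
move=> [_ hp] f.
have hN : 0 < #|{: lconf d S}|%:R :> C.
  rewrite ltr0n; apply/card_gt0P; by exists [ffun=> a0].
rewrite -(pmulr_rge0 _ hN) /dotp -sum_merge_avg.
apply: sumr_ge0 => x _.
have := hp (fun a => f (merge x a)); rewrite /dotp.
congr (0 <= _); apply: eq_bigr => a _.
rewrite embed_apply restrict_merge /applyop; congr (_ * _).
by apply: eq_bigr => b _; rewrite merge_merge.
Qed.

End Forms.
Arguments pinch {C n d I A}.
Arguments form_sum {C n d I}.
Arguments embed_psd {C n d}.
Arguments sum_invol {C T}.

Section Proj.
Variables (C : numClosedFieldType) (n d : nat) (i0 : 'I_n).
Local Notation cf := (conf n d).
Implicit Types (f g : cf -> C).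

Definition proj (u : 'I_d -> C) f : cf -> C :=
  fun x => u (x i0) * \sum_a (u a)^* * f (upd i0 x a).

Variable U : 'I_d -> 'I_d -> C.
Hypothesis horth : forall b b', \sum_a (U b a)^* * U b' a = (b == b')%:R.
Hypothesis hcomp : forall a c, \sum_b U b c * (U b a)^* = (c == a)%:R.

Lemma proj_sum f x : \sum_b proj (U b) f x = f x.
Proof.
rewrite /proj.
under eq_bigr do rewrite mulr_sumr.
rewrite exchange_big /=.
under eq_bigr => a _.
  under eq_bigr do rewrite mulrA.
  rewrite -mulr_suml hcomp.
  over.
rewrite (bigD1 (x i0)) //= eqxx mul1r upd_id big1 ?addr0 // => a ha.
by rewrite eq_sym (negbTE ha) mul0r.
Qed.

Lemma proj_sumE f : f = fun x => \sum_b proj (U b) f x.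
Proof. by apply: functional_extensionality => x; rewrite proj_sum. Qed.

Lemma proj_proj b b' f x :
  proj (U b) (proj (U b') f) x = if b == b' then proj (U b) f x else 0.
Proof.
rewrite /proj.
under eq_bigr do rewrite upd_at.
under eq_bigr => a _.
  under eq_bigr do rewrite upd_upd.
  over.
under eq_bigr do rewrite mulrA.
rewrite -mulr_suml horth.
by case: eqP => [-> | _]; rewrite ?mul1r // mul0r mulr0.
Qed.

Lemma proj_adj u f g : dotp (proj u f) g = dotp f (proj u g).
Proof.
rewrite /dotp /proj.
under eq_bigr => x _.
  rewrite rmorphM rmorph_sum /= mulr_sumr mulr_suml.
  over.
under [RHS]eq_bigr do rewrite !mulr_sumr.
rewrite (sum_upd_swap i0); apply: eq_bigr => x _; apply: eq_bigr => a _.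
rewrite upd_upd upd_id upd_at conjMl; ring.
Qed.

Lemma proj_comm (S : {set 'I_n}) (hh : lconf d S -> lconf d S -> C) u f :
  i0 \notin S ->
  applyop (embed hh) (proj u f) = proj u (applyop (embed hh) f).
Proof.
move=> hS; apply: functional_extensionality => x.
have mo : forall y (b : lconf d S), merge y b i0 = y i0 by move=> y b; rewrite merge_out.
have um : forall y (b : lconf d S) a, upd i0 (merge y b) a = merge (upd i0 y a) b.
  move=> y b a; apply/ffunP => i.
  case: (boolP (i \in S)) => hi.
    have hne : i != i0 by apply: contraNneq hS => <-.
    by rewrite upd_ne // !merge_in.
  rewrite [RHS]merge_out // [LHS]ffunE [RHS]ffunE; case: eqP => // _; by rewrite merge_out.
have ru : forall a, restrict S (upd i0 x a) = restrict S x.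
  move=> a; apply/ffunP => [[i hi]]; rewrite !ffunE /=.
  by have -> : (i == i0) = false by apply/negbTE; apply: contraNneq hS => <-.
rewrite embed_apply /proj.
transitivity (\sum_b \sum_a hh (restrict S x) b * (u (x i0) * ((u a)^* * f (merge (upd i0 x a) b)))).
  apply: eq_bigr => b _; rewrite mo mulr_sumr mulr_sumr; apply: eq_bigr => a _; by rewrite um.
rewrite exchange_big mulr_sumr; apply: eq_bigr => a _.
rewrite embed_apply ru !mulr_sumr; apply: eq_bigr => b _; ring.
Qed.

Lemma proj_split_gen v g :
  \sum_b dotp (proj (U b) v) (proj (U b) g) = dotp v g.
Proof.
under eq_bigr => b _.
  rewrite proj_adj.
  have -> : proj (U b) (proj (U b) g) = proj (U b) g.
    by apply: functional_extensionality => x; rewrite proj_proj eqxx.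
  over.
by rewrite -dotp_sumr -proj_sumE.
Qed.


Lemma split_norm v : \sum_b dotp (proj (U b) v) (proj (U b) v) = dotp v v.
Proof. exact: proj_split_gen. Qed.

Lemma split_commute (S : {set 'I_n}) (hh : lconf d S -> lconf d S -> C) v :
  i0 \notin S ->
  \sum_b dotp (proj (U b) v) (applyop (embed hh) (proj (U b) v)) =
  dotp v (applyop (embed hh) v).
Proof.
move=> hS; under eq_bigr do rewrite proj_comm //.
exact: proj_split_gen.
Qed.

Lemma split_pinch A (hA : forall f, 0 <= dotp f (applyop A f)) v :
  dotp v (applyop A v) <= d%:R * \sum_b dotp (proj (U b) v) (applyop A (proj (U b) v)).
Proof.
have := pinch hA (fun b => proj (U b) v).
by rewrite -proj_sumE card_ord.
Qed.

Lemma split_cross A v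
  (hc : forall b b', b != b' -> dotp (proj (U b) v) (applyop A (proj (U b') v)) = 0) :
  \sum_b dotp (proj (U b) v) (applyop A (proj (U b) v)) = dotp v (applyop A v).
Proof.
have e := form_sum A (fun b => proj (U b) v).
rewrite -proj_sumE in e; rewrite e; apply: eq_bigr => b _.
rewrite (bigD1 b) //= big1 ?addr0 // => b' hb'.
by apply: hc; rewrite eq_sym.
Qed.

End Proj.
Arguments proj {C n d}.
Arguments split_norm {C n d i0 U}.
Arguments split_commute {C n d i0 U}.
Arguments split_pinch {C n d i0 U}.
Arguments split_cross {C n d i0 U}.

Section Cross.
Variables (C : numClosedFieldType) (n d : nat) (i0 : 'I_n).
Local Notation cf := (conf n d).

Definition agree_le (x y : cf) := forall i : 'I_n, (i <= i0)%N -> x i = y i.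
Definition agree_gt (x y : cf) := forall i : 'I_n, (i0 < i)%N -> x i = y i.

Definition glue (x y : cf) : cf := [ffun i : 'I_n => if (i <= i0)%N then x i else y i].

Lemma glue_sum (K L : cf -> C)
  (hK : forall x y, agree_le x y -> K x = K y)
  (hL : forall x y, agree_gt x y -> L x = L y) :
  (\sum_x K x * L x) *+ #|{: cf}| = (\sum_x K x) * (\sum_y L y).
Proof.
rewrite mulr_suml.
under [RHS]eq_bigr do rewrite mulr_sumr.
rewrite pair_bigA /=.
rewrite (sum_invol (fun p : cf * cf => (glue p.1 p.2, glue p.2 p.1))
   (fun p => K p.1 * L p.2)); last first.
  have gg : forall x y : cf, glue (glue x y) (glue y x) = x.
    move=> x y; apply/ffunP => i; rewrite !ffunE.
    by case: (i <= i0)%N.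
  by case=> x y /=; rewrite !gg.
rewrite -(pair_bigA _ (fun x y => K (glue x y) * L (glue y x))) /=.
rewrite -sumrMnl; apply: eq_bigr => x _.
rewrite -sumr_constT; apply: eq_bigr => y _.
symmetry; congr (_ * _).
  by apply: hK => i hi; rewrite ffunE hi.
apply: hL => i hi; rewrite ffunE; case: ifP => //.
by rewrite leqNgt hi.
Qed.

Variable U : 'I_d -> 'I_d -> C.
Variables (Up w : cf -> C) (S : {set 'I_n}) (hh : lconf d S -> lconf d S -> C).
Hypothesis hUp_upd : forall x a, Up (upd i0 x a) = Up x.
Hypothesis hUp_dep : forall x y : cf, (forall i : 'I_n, (i < i0)%N -> x i = y i) -> Up x = Up y.
Hypothesis hw_dep : forall x y : cf, (forall i : 'I_n, (i0 <= i)%N -> x i = y i) -> w x = w y.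
Hypothesis hS : forall s, s \in S -> (s <= i0)%N.

Definition Mw (a a' : 'I_d) := \sum_x (w (upd i0 x a))^* * w (upd i0 x a').
Hypothesis hdiag : forall b b', b != b' ->
  \sum_a \sum_a' U b a * Mw a a' * (U b' a')^* = 0.

Let v := fun x => Up x * w x.
Let G b x := Up x * U b (x i0).
Let c b x := \sum_a (U b a)^* * w (upd i0 x a).

Lemma pv b : proj i0 (U b) v = fun x => G b x * c b x.
Proof.
apply: functional_extensionality => x; rewrite /proj /v /G /c.
under eq_bigr do rewrite hUp_upd mulrCA.
by rewrite -mulr_sumr mulrA [_ * Up x]mulrC.
Qed.

Lemma c_merge b x (be : lconf d S) : c b (merge x be) = c b x.
Proof.
apply: eq_bigr => a _; congr (_ * _); apply: hw_dep => i hi.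
case: (eqVneq i i0) => [->|hne]; first by rewrite !upd_at.
rewrite !upd_ne // merge_out //; apply/negP => hin.
have := hS _ hin; have : (nat_of_ord i) != i0 by [].
lia.
Qed.

Lemma G_dep b x y : agree_le x y -> G b x = G b y.
Proof.
move=> hxy; rewrite /G (hUp_dep x y) ?hxy // => i hi.
by apply: hxy; apply: ltnW.
Qed.

Lemma EG_dep b x y : agree_le x y ->
  applyop (embed hh) (G b) x = applyop (embed hh) (G b) y.
Proof.
move=> hxy; rewrite !embed_apply.
have -> : restrict S x = restrict S y.
  by apply/ffunP => j; rewrite !ffunE; apply: hxy; apply: hS; apply: (valP j).
apply: eq_bigr => be _; congr (_ * _); apply: G_dep => i hi.
case: (boolP (i \in S)) => hin; first by rewrite !merge_in.
by rewrite !merge_out // hxy.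
Qed.

Lemma c_dep b x y : agree_gt x y -> c b x = c b y.
Proof.
move=> hxy; apply: eq_bigr => a _; congr (_ * _); apply: hw_dep => i hi.
case: (eqVneq i i0) => [->|hne]; first by rewrite !upd_at.
rewrite !upd_ne //; apply: hxy.
have : (nat_of_ord i) != i0 by []. lia.
Qed.

Lemma Eapp b x :
  applyop (embed hh) (fun y => G b y * c b y) x = c b x * applyop (embed hh) (G b) x.
Proof.
rewrite !embed_apply mulr_sumr; apply: eq_bigr => be _.
rewrite c_merge; ring.
Qed.

Lemma sumL b b' : b != b' -> \sum_x (c b x)^* * c b' x = 0.
Proof.
move=> hb; apply: eq_trans _ (hdiag _ _ hb); rewrite /c.
transitivity (\sum_x \sum_a \sum_a' U b a * ((w (upd i0 x a))^* * w (upd i0 x a')) * (U b' a')^*).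
  apply: eq_bigr => x _; rewrite rmorph_sum /= mulr_suml; apply: eq_bigr => a _.
  rewrite conjMl mulr_sumr; apply: eq_bigr => a' _; ring.
rewrite exchange_big; apply: eq_bigr => a _.
rewrite exchange_big; apply: eq_bigr => a' _.
by rewrite /Mw mulr_sumr mulr_suml.
Qed.

Lemma cross0 b b' : b != b' ->
  dotp (proj i0 (U b) v) (applyop (embed hh) (proj i0 (U b') v)) = 0.
Proof.
move=> hb; rewrite !pv /dotp.
transitivity (\sum_x ((G b x)^* * applyop (embed hh) (G b') x) * ((c b x)^* * c b' x)).
  apply: eq_bigr => x _; rewrite Eapp rmorphM; ring.
set X := \sum_x _.
have : X *+ #|{: cf}| = 0.
  rewrite /X glue_sum.
  - by rewrite sumL // mulr0.
  - by move=> x y hxy; rewrite (G_dep b x y hxy) (EG_dep b' x y hxy).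
  - by move=> x y hxy; rewrite (c_dep b x y hxy) (c_dep b' x y hxy).
move/eqP; rewrite mulrn_eq0 => /orP [hc|/eqP //].
have : (0 < #|{: cf}|)%N by apply/card_gt0P; exists [ffun=> b].
by rewrite lt0n hc.
Qed.

End Cross.
Arguments cross0 {C n d i0 U Up w S hh}.
Arguments Mw {C n d}.

Section Spec.
Variables (C : numClosedFieldType) (d : nat).
Local Open Scope sesquilinear_scope.

Lemma spectral_basis (M : 'I_d -> 'I_d -> C)
  (hM : forall a a', M a' a = (M a a')^*) :
  exists U : 'I_d -> 'I_d -> C,
    [/\ forall b b', \sum_a (U b a)^* * U b' a = (b == b')%:R,
        forall a c, \sum_b U b c * (U b a)^* = (c == a)%:R &
        forall b b', b != b' -> \sum_a \sum_a' U b a * M a a' * (U b' a')^* = 0].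
Proof.
set A : 'M[C]_d := \matrix_(a, a') M a a'.
have hA : A^t* = A.
  by apply/matrixP => i j; rewrite /A !mxE (hM j i).
have nA : A \is normalmx by apply/normalmxP; rewrite hA.
set P := spectralmx A.
have Pu : P \is unitarymx := spectral_unitarymx A.
have PPt : P *m P^t* = 1%:M by apply/unitarymxP.
have PtP : P^t* *m P = 1%:M.
  by rewrite -invmx_unitary // mulVmx // unitarymx_unit.
have eA := orthomx_spectralP nA.
have hD : P *m A *m P^t* = diag_mx (spectral_diag A).
  rewrite {1}eA invmx_unitary // !mulmxA PPt mul1mx -mulmxA PPt mulmx1 //.
exists (fun b a => P b a); split.
- move=> b b'; have := congr1 (fun X : 'M[C]_d => X b' b) PPt; rewrite /= !mxE eq_sym => <-.
  by apply: eq_bigr => a _; rewrite !mxE mulrC.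
- move=> a c; have := congr1 (fun X : 'M[C]_d => X a c) PtP; rewrite /= !mxE eq_sym => <-.
  by apply: eq_bigr => b _; rewrite !mxE mulrC.
- move=> b b' hb; have := congr1 (fun X : 'M[C]_d => X b b') hD.
  rewrite [in X in _ = X -> _]mxE (negbTE hb) mulr0n => e; apply: eq_trans _ e.
  rewrite mxE exchange_big /=; apply: eq_bigr => a' _.
  rewrite !mxE mulr_suml; apply: eq_bigr => a _; by rewrite !mxE.
Qed.

End Spec.
Arguments spectral_basis {C d}.

Lemma exists_max (C : numClosedFieldType) (d : nat) (a0 : 'I_d) (f : 'I_d -> C)
  (hr : forall b, f b \is Num.real) : exists b0, forall b, f b <= f b0.
Proof.
suff H : forall s : seq 'I_d, exists b0, forall b, b \in a0 :: s -> f b <= f b0.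
  have [b0 hb0] := H (enum 'I_d); exists b0 => b; apply: hb0.
  by rewrite in_cons mem_enum orbT.
elim=> [|x s [b0 hb0]].
  by exists a0 => b; rewrite inE => /eqP ->.
case/orP: (real_leVge (hr x) (hr b0)) => hx.
- exists b0 => b; rewrite in_cons => /orP [/eqP ->|]; first by apply: hb0; rewrite inE eqxx.
  rewrite in_cons => /orP [/eqP -> //|hb]; by apply: hb0; rewrite in_cons hb orbT.
- exists x => b; rewrite in_cons => /orP [/eqP ->|].
    by apply: le_trans (hb0 a0 _) hx; rewrite inE eqxx.
  rewrite in_cons => /orP [/eqP -> //|hb].
  by apply: le_trans (hb0 b _) hx; rewrite in_cons hb orbT.
Qed.

Section Main.
Variables (C : numClosedFieldType) (n k d : nat) (a0 : 'I_d).
Local Notation cf := (conf n d).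
Variable h : forall S : {set 'I_n}, lconf d S -> lconf d S -> C.
Hypothesis hpsd : forall S : {set 'I_n}, #|S| == k -> psd (h S).

Definition qS S (f : cf -> C) := dotp f (applyop (embed (h S)) f).
Definition valp (phi : 'I_n -> 'I_d -> C) :=
  dotp (prodstate phi) (applyop (kham k h) (prodstate phi)).

Lemma kham_split (f : cf -> C) : dotp f (applyop (kham k h) f) = \sum_(S : {set 'I_n} | #|S| == k) qS S f.
Proof.
rewrite /qS /dotp /applyop /kham.
rewrite exchange_big /=; apply: eq_bigr => x _.
rewrite -mulr_sumr; congr (_ * _).
under eq_bigr do rewrite mulr_suml.
by rewrite exchange_big.
Qed.

Lemma qS_ge0 (S : {set 'I_n}) (f : cf -> C) : #|S| == k -> 0 <= qS S f.
Proof. by move=> hS; apply: (embed_psd a0); apply: hpsd. Qed.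

Lemma valp_ge0 phi : 0 <= valp phi.
Proof. by rewrite /valp kham_split; apply: sumr_ge0 => S hS; apply: qS_ge0. Qed.

Definition expo (m : nat) (S : {set 'I_n}) := (#|[set s in S | (m <= s)%N]| - 1)%N.
Definition wt m S : C := (((d ^ expo m S)%N)%:R)^-1.

Definition Inv (m : nat) := forall (u : 'I_n -> 'I_d -> C) (w : cf -> C),
  (forall i, dotp (u i) (u i) = 1) ->
  (forall x y : cf, (forall i : 'I_n, (m <= i)%N -> x i = y i) -> w x = w y) ->
  exists phi : 'I_n -> 'I_d -> C, (forall i, dotp (phi i) (phi i) = 1) /\
  \sum_(S : {set 'I_n} | #|S| == k) wt m S * qS S (fun x : cf => (\prod_(i : 'I_n | (i < m)%N) u i (x i)) * w x)
  <= dotp (fun x : cf => (\prod_(i : 'I_n | (i < m)%N) u i (x i)) * w x)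
          (fun x : cf => (\prod_(i : 'I_n | (i < m)%N) u i (x i)) * w x) * valp phi.

Lemma dotp_prod (u : 'I_n -> 'I_d -> C) (hu : forall i, dotp (u i) (u i) = 1) :
  dotp (prodstate u) (prodstate u) = 1.
Proof.
rewrite /dotp /prodstate.
under eq_bigr do rewrite rmorph_prod -big_split /=.
rewrite -(bigA_distr_bigA (fun i a => (u i a)^* * u i a)) /=.
by apply: big1 => i _; apply: hu.
Qed.

Lemma Inv_base : Inv n.
Proof.
move=> u w hu hw; exists u; split => //.
set c := w [ffun=> a0].
have hv : (fun x : cf => (\prod_(i : 'I_n | (i < n)%N) u i (x i)) * w x) = fun x : cf => prodstate u x * c.
  apply: functional_extensionality => x; rewrite /prodstate /c.
  rewrite (hw x [ffun=> a0]); last by move=> i; rewrite leqNgt ltn_ord.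
  congr (_ * _); apply: eq_bigl => i; exact: ltn_ord.
rewrite hv dotp_scalel dotp_scaler dotp_prod //.
rewrite /valp kham_split mulr_sumr; apply: ler_sum => S _.
rewrite /qS applyop_scale dotp_scalel dotp_scaler.
have -> : wt n S = 1.
  rewrite /wt /expo; have -> : [set s in S | (n <= s)%N] = set0.
    by apply/setP => s; rewrite !inE leqNgt ltn_ord andbF.
  by rewrite cards0 expn0 invr1.
rewrite mul1r; set q := dotp _ _; by rewrite mul1r mulrA mulrAC.
Qed.


Lemma Inv_step m (hm : (m < n)%N) : Inv m.+1 -> Inv m.
Proof.
move=> IH u w hu hw.
pose i0 : 'I_n := Ordinal hm.
pose Up := fun x : cf => \prod_(i : 'I_n | (i < m)%N) u i (x i).
pose v := fun x : cf => Up x * w x.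
suff : exists phi : 'I_n -> 'I_d -> C, (forall i, dotp (phi i) (phi i) = 1) /\
  \sum_(S : {set 'I_n} | #|S| == k) wt m S * qS S v <= dotp v v * valp phi by [].
have hM : forall a a', Mw i0 w a' a = (Mw i0 w a a')^*.
  move=> a a'; rewrite /Mw rmorph_sum /=; apply: eq_bigr => x _.
  by rewrite conjMl mulrC.
have [U [horth hcomp hdiag]] := spectral_basis _ hM.
have hUp_upd : forall x a, Up (upd i0 x a) = Up x.
  move=> x a; apply: eq_bigr => i hi; rewrite upd_ne //.
  by apply: contraTneq hi => ->; rewrite ltnn.
have hUp_dep : forall x y : cf, (forall i : 'I_n, (i < i0)%N -> x i = y i) -> Up x = Up y.
  by move=> x y hxy; apply: eq_bigr => i hi; rewrite hxy.
have hw_dep : forall x y : cf, (forall i : 'I_n, (i0 <= i)%N -> x i = y i) -> w x = w y.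
  exact: hw.
pose u' b := fun i : 'I_n => if i == i0 then U b else u i.
pose w' b := fun x : cf => \sum_a (U b a)^* * w (upd i0 x a).
have hv' : forall b, (fun x : cf => (\prod_(i : 'I_n | (i < m.+1)%N) u' b i (x i)) * w' b x)
    = proj i0 (U b) v.
  move=> b; apply: functional_extensionality => x; rewrite /proj /v /w'.
  under [in RHS]eq_bigr do rewrite hUp_upd mulrCA.
  rewrite -mulr_sumr mulrA; congr (_ * _).
  rewrite (bigD1 i0) /=; last by [].
  rewrite /u' eqxx; congr (_ * _).
  apply: eq_big => i.
    apply/andP/idP => [[h1 h2]|h1].
      have : (nat_of_ord i) != m by apply: contraNneq h2 => e; apply/eqP/val_inj.
      lia.
    split; first lia.
    by apply: contraTneq h1 => ->; rewrite ltnn.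
  by case/andP => _ /negbTE ->.
have IHb : forall b, exists phi : 'I_n -> 'I_d -> C, (forall i, dotp (phi i) (phi i) = 1) /\
    \sum_(S : {set 'I_n} | #|S| == k) wt m.+1 S * qS S (proj i0 (U b) v)
    <= dotp (proj i0 (U b) v) (proj i0 (U b) v) * valp phi.
  move=> b; rewrite -hv'; apply: IH.
    move=> i; rewrite /u'; case: eqP => _; last exact: hu.
    by rewrite /dotp horth eqxx.
  move=> x y hxy; apply: eq_bigr => a _; congr (_ * _); apply: hw => i hi.
  case: (eqVneq i i0) => [->|hne]; first by rewrite !upd_at.
  rewrite !upd_ne //; apply: hxy.
  have : (nat_of_ord i) != m by apply: contraNneq hne => e; apply/eqP/val_inj.
  lia.
have [Phi HPhi] := fin_all_exists IHb.
have [bs hbs] := @exists_max C d a0 (fun b => valp (Phi b))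
  (fun b => ger0_real (valp_ge0 (Phi b))).
exists (Phi bs); split; first by case: (HPhi bs).
have step : forall S : {set 'I_n}, #|S| == k ->
    wt m S * qS S v <= wt m.+1 S * \sum_b qS S (proj i0 (U b) v).
  move=> S hS.
  have hA : [set s in S | (m.+1 <= s)%N] = [set s in S | (m <= s)%N] :\ i0.
    apply/setP => s; rewrite !inE; case: (eqVneq s i0) => [->|hne] /=.
      by rewrite ltnn andbF.
    have : (nat_of_ord s) != m by apply: contraNneq hne => e; apply/eqP/val_inj.
    by rewrite ltn_neqAle eq_sym => ->.
  have hcard : #|[set s in S | (m <= s)%N]| =
      ((i0 \in S) + #|[set s in S | (m.+1 <= s)%N]|)%N.
    by rewrite hA (cardsD1 i0) !inE leqnn andbT.
  case: (boolP (i0 \in S)) => hi0.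
    case: (posnP #|[set s in S | (m.+1 <= s)%N]|) => ht.
      rewrite /wt /expo hcard hi0 ht /= expn0 invr1 !mul1r.
      rewrite /qS (split_cross hcomp (embed (h S)) v) //.
      move=> b b' hb; apply: (cross0 hUp_upd hUp_dep hw_dep) => //.
      move=> s hs; rewrite leqNgt; apply/negP => hlt.
      move/eqP: ht; rewrite cards_eq0 => /eqP/setP/(_ s); rewrite !inE hs.
      by rewrite hlt.
    have hp : qS S v <= d%:R * \sum_b qS S (proj i0 (U b) v)
      := split_pinch hcomp (embed (h S)) (embed_psd a0 _ _ (hpsd S hS)) v.
    rewrite /wt /expo hcard hi0 /=.
    move: ht; move: #|_| => t ht.
    case: t ht => [//|t] _.
    rewrite add1n subSS subn0 expnS natrM invfM.
    have hd0 : (d%:R : C) != 0 by rewrite pnatr_eq0 -lt0n (leq_ltn_trans (leq0n _) (ltn_ord a0)).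
    have hwt : 0 <= (d%:R : C)^-1 * (((d ^ t)%N)%:R : C)^-1.
      by rewrite mulr_ge0 // invr_ge0 ler0n.
    apply: le_trans (ler_wpM2l hwt hp) _.
    have e : forall a b c : C, a != 0 -> a^-1 * b * (a * c) = b * c.
      by move=> a b c ha; field.
    by rewrite e // subn1.
  rewrite /wt /expo hcard (negbTE hi0) add0n.
  by rewrite /qS (split_commute horth hcomp S (h S) v hi0).
apply: (@le_trans _ _ (\sum_(S : {set 'I_n} | #|S| == k) wt m.+1 S * \sum_b qS S (proj i0 (U b) v))).
  by apply: ler_sum => S hS; apply: step.
rewrite -(@split_norm _ _ _ i0 U horth hcomp v) mulr_suml.
under eq_bigr do rewrite mulr_sumr.
rewrite exchange_big /=; apply: ler_sum => b _.
apply: le_trans (proj2 (HPhi b)) _.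
by apply: ler_wpM2l; [exact: dotp_ge0 | exact: hbs].
Qed.


Lemma Inv_all m : (m <= n)%N -> Inv m.
Proof.
move: {2}(n - m)%N (leqnn (n - m)%N) => j.
elim: j m => [|j IH] m hj hm.
  have -> : m = n by lia.
  exact: Inv_base.
case: (ltnP m n) => hmn; last first.
  have -> : m = n by lia.
  exact: Inv_base.
apply: Inv_step => //; apply: IH => //; lia.
Qed.

Lemma final (OPT : C) (v : cf -> C) (hv : exists x, v x != 0)
  (hev : forall x, applyop (kham k h) v x = OPT * v x) :
  exists phi : 'I_n -> 'I_d -> C, (forall i, dotp (phi i) (phi i) = 1) /\
    OPT / ((d ^ (k - 1))%N)%:R <= valp phi.
Proof.
pose u0 := fun (i : 'I_n) (a : 'I_d) => ((a == a0)%:R : C).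
have hu0 : forall i, dotp (u0 i) (u0 i) = 1.
  move=> i; rewrite /dotp (bigD1 a0) //= big1 ?addr0.
    by rewrite /u0 eqxx rmorph1 mulr1.
  by move=> a ha; rewrite /u0 (negbTE ha) mulr0.
have hw : forall x y : cf, (forall i : 'I_n, (0 <= i)%N -> x i = y i) -> v x = v y.
  by move=> x y hxy; congr v; apply/ffunP => i; apply: hxy.
have [phi [hphi hle]] := Inv_all 0 (leq0n n) u0 v hu0 hw.
exists phi; split => //.
have ev : (fun x : cf => (\prod_(i : 'I_n | (i < 0)%N) u0 i (x i)) * v x) = v.
  apply: functional_extensionality => x; by rewrite big_pred0 // mul1r.
rewrite ev in hle.
have hH : applyop (kham k h) v = fun x => v x * OPT.
  by apply: functional_extensionality => x; rewrite hev mulrC.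
have hsum : \sum_(S : {set 'I_n} | #|S| == k) wt 0 S * qS S v =
    dotp v v * (OPT / ((d ^ (k - 1))%N)%:R).
  transitivity (\sum_(S : {set 'I_n} | #|S| == k) (((d ^ (k - 1))%N)%:R)^-1 * qS S v).
    apply: eq_bigr => S hS; congr (_ * _); rewrite /wt /expo.
    have -> : [set s in S | (0 <= s)%N] = S by apply/setP => s; rewrite !inE andbT.
    by rewrite (eqP hS).
  rewrite -mulr_sumr -kham_split hH dotp_scaler; move: (dotp v v) => z; by rewrite mulrCA [_^-1 * OPT]mulrC.
rewrite hsum in hle.
have hpos : 0 < dotp v v.
  rewrite lt_def dotp_ge0 andbT; apply/negP => /eqP h0.
  case: hv => x0 hx0; move: h0; rewrite /dotp => /eqP.
  rewrite psumr_eq0; last by move=> x _; rewrite mulrC mul_conjC_ge0.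
  move=> /allP /(_ x0 (mem_index_enum _)) /implyP /(_ isT).
  by rewrite mulrC mul_conjC_eq0 (negbTE hx0).
by rewrite -(ler_pM2l hpos).
Qed.


End Main.

Theorem theorem1 (C : numClosedFieldType) (n k d : nat)
  (hk : (1 <= k)%N) (hd : (1 <= d)%N) (hkn : (k <= n)%N)
  (h : forall S : {set 'I_n}, lconf d S -> lconf d S -> C)
  (hloc : forall S : {set 'I_n}, #|S| = k -> psd (h S) /\ opnorm_le1 (h S))
  (OPT : C) (hOPT : is_lambda_max (kham k h) OPT) :
  exists phi : 'I_n -> 'I_d -> C,
    (forall i : 'I_n, dotp (phi i) (phi i) = 1) /\
    OPT / ((d ^ (k - 1))%N)%:R <= dotp (prodstate phi) (applyop (kham k h) (prodstate phi)).
Proof.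
have a0 : 'I_d := Ordinal hd.
have hpsd : forall S : {set 'I_n}, #|S| == k -> psd (h S).
  by move=> S hS; case: (hloc S (eqP hS)).
case: hOPT => [[v [hv hev]] _].
exact: (@final C n k d a0 h hpsd OPT v hv hev).
Qed.
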